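(* Let $K$ be a field, $\vartheta$ any one of the four types (left, right, pre-two-sided, two-sided), and $\mathcal A$ a $K$-algebra which is algebraic over $K$ with $\mathcal A\neq K$ (i.e., $\mathcal A\neq K\cdot 1$). Then for every proper $\vartheta$-Mathieu subspace $M$ of $\mathcal A$ there exists a maximal non-trivial $\vartheta$-Mathieu subspace of $\mathcal A$ containing $M$. In particular, $\mathcal A$ has at least one maximal non-trivial $\vartheta$-Mathieu subspace.
   Context: All algebras are associative and unital. $\mathcal A$ is algebraic over $K$ if every element is a root of a nonzero polynomial over $K$. A subspace is proper if $\neq\mathcal A$ and non-trivial if $\neq 0,\mathcal A$; a maximal non-trivial $\vartheta$-Mathieu subspace is one maximal under inclusion among non-trivial $\vartheta$-Mathieu subspaces. A $K$-subspace $V$ is a left (resp. right) Mathieu subspace if whenever $a^m\in V$ for all $m\ge1$, then for every $b\in\mathcal A$, $ba^m\in V$ (resp. $a^mb\in V$) for all sufficiently large $m$; pre-two-sided if both left and right; two-sided if whenever $a^m\in V$ for all $m\ge1$, for all $b,c\in\mathcal A$, $ba^mc\in V$ for all sufficiently large $m$. *)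

(* Defs.v *)
From HB Require Import structures.
From mathcomp Require Import all_boot all_order all_algebra.
Set Implicit Arguments. Unset Strict Implicit. Unset Printing Implicit Defensive.
Import GRing.Theory.
Local Open Scope ring_scope.

Inductive mtype := MLeft | MRight | MPreTwoSided | MTwoSided.

Section MathieuDefs.
Variables (K : fieldType) (A : algType K).

Definition algebraic_elt (a : A) : Prop :=
  exists p : {poly K}, p != 0 /\ (map_poly (in_alg A) p).[a] = 0.

Definition algebraic_alg : Prop := forall a : A, algebraic_elt a.

Definition subspace (V : A -> Prop) : Prop :=
  [/\ V 0, (forall x y, V x -> V y -> V (x + y)) & (forall (k : K) x, V x -> V (k *: x))].

Definition all_powers_in (V : A -> Prop) (a : A) : Prop :=
  forall m : nat, (1 <= m)%N -> V (a ^+ m).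

Definition left_cond (V : A -> Prop) : Prop :=
  forall a, all_powers_in V a ->
  forall b, exists N : nat, forall m, (N <= m)%N -> V (b * a ^+ m).

Definition right_cond (V : A -> Prop) : Prop :=
  forall a, all_powers_in V a ->
  forall b, exists N : nat, forall m, (N <= m)%N -> V (a ^+ m * b).

Definition two_sided_cond (V : A -> Prop) : Prop :=
  forall a, all_powers_in V a ->
  forall b c, exists N : nat, forall m, (N <= m)%N -> V (b * a ^+ m * c).

Definition mathieu (t : mtype) (V : A -> Prop) : Prop :=
  subspace V /\
  match t with
  | MLeft => left_cond V
  | MRight => right_cond V
  | MPreTwoSided => left_cond V /\ right_cond V
  | MTwoSided => two_sided_cond V
  end.

Definition mproper (V : A -> Prop) : Prop := exists x, ~ V x.

Definition mnontrivial (V : A -> Prop) : Prop :=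
  (exists x, V x /\ x <> 0) /\ mproper V.

Definition included (V W : A -> Prop) : Prop := forall x, V x -> W x.

Definition maximal_nontrivial_mathieu (t : mtype) (N : A -> Prop) : Prop :=
  [/\ mathieu t N, mnontrivial N &
      forall N', mathieu t N' -> mnontrivial N' -> included N N' -> included N' N].

End MathieuDefs.

(* Main.v *)
Require Import Defs.
From HB Require Import structures.
From mathcomp Require Import all_boot all_order all_algebra.
From mathcomp Require Import zify.
From mathcomp Require Import boolp classical_sets.
From Stdlib Require Import Classical.
Import GRing.Theory.
Local Open Scope ring_scope.

Section S.
Variables (K : fieldType) (A : algType K).
Implicit Types (V : A -> Prop).

Lemma sub_sum V (I : Type) (r : seq I) (F : I -> A) :
  subspace V -> (forall i, V (F i)) -> V (\sum_(i <- r) F i).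
Proof.
case=> V0 VD _ HF; elim: r => [|x r IH]; first by rewrite big_nil.
by rewrite big_cons; apply: VD.
Qed.

Lemma sub_opp V x : subspace V -> V x -> V (- x).
Proof. by case=> _ _ VZ Vx; rewrite -scaleN1r; apply: VZ. Qed.

Lemma alg_powers (a : A) : algebraic_elt a ->
  exists d : nat, forall V, subspace V ->
    (forall m, (1 <= m)%N -> (m <= d)%N -> V (a ^+ m)) -> all_powers_in V a.
Proof.
case=> p [pn0 pa].
have sz : size (map_poly (in_alg A) p) = size p by rewrite size_map_poly.
rewrite (horner_coef_wide _ (leqnn _)) sz in pa.
have : (0 < size p)%N by rewrite size_poly_gt0.
case Hs: (size p) => [//|e] _.
rewrite Hs in pa.
have lc0 : p`_e != 0.
  have := lead_coef_eq0 p; rewrite /lead_coef Hs /= => ->; exact: pn0.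
exists e => V sV Hle m.
elim: m {-2}m (leqnn m) => [|n IH] m Hmn Hm1; first by case: m Hm1 Hmn.
case: (leqP m e) => Hme; first exact: Hle.
have Hk : (1 <= m - e)%N by rewrite subn_gt0.
pose k := (m - e)%N.
have E : \sum_(i < e.+1) p`_i *: a ^+ (i + k) = 0.
  transitivity (a ^+ k * \sum_(i < e.+1) (map_poly (in_alg A) p)`_i * a ^+ i); last by rewrite pa mulr0.
  rewrite mulr_sumr; apply: eq_bigr => i _.
  by rewrite coef_map /= mulr_algl -scalerAr -exprD addnC.
rewrite big_ord_recr /= in E.
have Em : a ^+ m = - (p`_e)^-1 *: \sum_(i < e) p`_i *: a ^+ (i + k).
  have : p`_e *: a ^+ (e + k) = - \sum_(i < e) p`_i *: a ^+ (i + k).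
    by apply/eqP; rewrite -addr_eq0 addrC E.
  move=> /(congr1 (fun x => (p`_e)^-1 *: x)); rewrite scalerA mulVf // scale1r.
  by rewrite subnKC ?(ltnW Hme) // scalerN scaleNr.
have [_ _ VZ] := sV.
rewrite Em; apply VZ; apply: sub_sum => // i; apply VZ.
apply: IH; last by rewrite addn_gt0 Hk orbT.
rewrite -ltnS; apply: leq_trans Hmn; rewrite /k; have := ltn_ord i; lia.
Qed.

Lemma mathieu_all t V : subspace V ->
  (forall a, all_powers_in V a -> forall b c, exists N : nat,
     forall m, (N <= m)%N -> V (b * a ^+ m * c)) -> mathieu t V.
Proof.
move=> sV H; split=> //; have HL : left_cond V.
  move=> a Ha b; have [N HN] := H a Ha b 1; exists N => m Hm.
  by have := HN m Hm; rewrite mulr1.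
have HR : right_cond V.
  move=> a Ha b; have [N HN] := H a Ha 1 b; exists N => m Hm.
  by have := HN m Hm; rewrite mul1r.
by case: t.
Qed.

Lemma pow1 {V} : V 1 -> all_powers_in V 1.
Proof. by move=> V1 m _; rewrite expr1n. Qed.

Lemma mathieu_one t V : mathieu t V -> V 1 -> forall x, V x.
Proof.
move=> [_ H] V1 x; have P1 := pow1 V1.
case: t H => [HL|HR|[HL _]|H2].
- by have [N HN] := HL 1 P1 x; have := HN N (leqnn N); rewrite expr1n mulr1.
- by have [N HN] := HR 1 P1 x; have := HN N (leqnn N); rewrite expr1n mul1r.
- by have [N HN] := HL 1 P1 x; have := HN N (leqnn N); rewrite expr1n mulr1.
- by have [N HN] := H2 1 P1 x 1; have := HN N (leqnn N); rewrite expr1n !mulr1.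
Qed.

Lemma exists_nontriv t : (exists a : A, forall k : K, a <> k%:A) ->
  exists V, mathieu t V /\ mnontrivial V.
Proof.
move=> [x0 Hx0].
case: (classic (exists x : A, x <> 0 /\ (x ^+ 2 = 0 \/ forall k : K, x ^+ 2 <> k *: x))).
  move=> [x [xn0 Hx]].
  pose V := fun y : A => exists k : K, y = k *: x.
  have sV : subspace V.
    split; first by exists 0; rewrite scale0r.
      by move=> _ _ [k ->] [j ->]; exists (k + j); rewrite scalerDl.
    by move=> c _ [k ->]; exists (c * k); rewrite scalerA.
  have key : forall a, all_powers_in V a -> a ^+ 2 = 0.
    move=> a Ha; have [k Hk] := Ha 1%N isT; rewrite expr1 in Hk; subst a.
    have [j Hj] := Ha 2%N isT; rewrite exprZn in Hj *.
    case: Hx => [-> | Hx]; first by rewrite scaler0.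
    case: (eqVneq k 0) => [->|kn0]; first by rewrite expr0n /= scale0r.
    exfalso; apply: (Hx (j / k ^+ 2)).
    rewrite -[LHS]scale1r -(@mulVf _ (k ^+ 2)) ?expf_neq0 // -[LHS]scalerA Hj.
    by rewrite scalerA mulrC.
  have mV : mathieu t V.
    apply: mathieu_all => // a Ha b c; exists 2%N => m Hm.
    rewrite -(subnKC Hm) exprD (key a Ha).
    have -> : b * (0 * a ^+ (m - 2)) * c = 0 by rewrite mul0r mulr0 mul0r.
    by exists 0; rewrite scale0r.
  exists V; split => //; split; first by exists x; split => //; exists 1; rewrite scale1r.
  exists 1 => V1; have := key 1 (pow1 V1); rewrite expr1n => /eqP; by rewrite oner_eq0.
move=> Hn.
have Hn' : forall x : A, x <> 0 -> x ^+ 2 <> 0 /\ exists k : K, x ^+ 2 = k *: x.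
  move=> x xn; split; first by move=> h; apply: Hn; exists x; split => //; left.
  apply: NNPP => h; apply: Hn; exists x; split => //; right => k hk; apply: h; by exists k.
have nil : forall y : A, y * y = 0 -> y = 0.
  move=> y yy; apply: NNPP => y0; have [] := Hn' y y0; by rewrite expr2.
have x0n0 : x0 <> 0 by move=> h; apply: (Hx0 0); rewrite h scale0r.
have [Hsq [c Hc]] := Hn' x0 x0n0.
have cn0 : c != 0 by apply/eqP => c0; apply: Hsq; rewrite Hc c0 scale0r.
pose e := c^-1 *: x0.
have ee : e * e = e.
  rewrite -expr2 exprZn Hc scalerA /e; congr (_ *: _).
  by rewrite expr2 -mulrA mulVf // mulr1.
have fe : (1 - e) * e = 0 by rewrite mulrBl mul1r ee subrr.
have ef : e * (1 - e) = 0 by rewrite mulrBr mulr1 ee subrr.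
have comm : forall b, e * b = b * e.
  move=> b.
  have h1 : e * b * (1 - e) = 0.
    by apply: nil; rewrite -!mulrA (mulrA (1 - e)) fe mul0r !mulr0.
  have h2 : (1 - e) * b * e = 0.
    by apply: nil; rewrite -!mulrA (mulrA e) ef mul0r !mulr0.
  have E1 : e * b = e * b * e.
    by apply/eqP; rewrite -subr_eq0 -h1 mulrBr mulr1.
  have E2 : b * e = e * b * e.
    by apply/eqP; rewrite -subr_eq0 -h2 mulrBl mul1r mulrBl.
  by rewrite E1 E2.
pose V := fun y : A => exists b : A, y = b * e.
have sV : subspace V.
  split; first by exists 0; rewrite mul0r.
    by move=> _ _ [k ->] [j ->]; exists (k + j); rewrite mulrDl.
  by move=> k _ [b ->]; exists (k *: b); rewrite scalerAl.
exists V; split.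
  apply: mathieu_all => // a Ha b d; exists 1%N => m Hm.
  have [b' ->] := Ha m Hm; exists (b * b' * d).
  by rewrite -!mulrA comm.
have en0 : e <> 0.
  move=> h; apply: x0n0; rewrite -[x0]scale1r -(mulfV cn0) -scalerA.
  by rewrite -/e h scaler0.
split; first by exists e; split => //; exists 1; rewrite mul1r.
exists 1 => -[b hb]; apply: (Hx0 c).
have e1 : e = 1 by rewrite -[LHS]mul1r hb -mulrA ee -hb.
by rewrite -[x0]scale1r -(mulfV cn0) -scalerA -/e e1.
Qed.
End S.

Local Open Scope classical_set_scope.

Theorem theorem4p21 (K : fieldType) (A : algType K) (t : mtype) :
  algebraic_alg A ->
  (exists a : A, forall k : K, a <> k%:A) ->
  (forall M : A -> Prop, mathieu t M -> mproper M ->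
     exists N : A -> Prop, maximal_nontrivial_mathieu t N /\ included M N) /\
  (exists N : A -> Prop, maximal_nontrivial_mathieu t N).
Proof.
move=> alg Hx0.
have main : forall M : A -> Prop, mathieu t M -> mproper M ->
     exists N : A -> Prop, maximal_nontrivial_mathieu t N /\ included M N.
  move=> M HM PM.
  have [S0 [HS0 [NS0 MS0]]] : exists S0, mathieu t S0 /\ mnontrivial S0 /\ included M S0.
    case: (classic (exists x, M x /\ x <> 0)) => hx.
      by exists M; split => //; split => //; split.
    have [V0 [HV0 NV0]] := @exists_nontriv _ _ t Hx0.
    exists V0; split => //; split => // y My.
    have -> : y = 0 by apply: NNPP => yn; apply: hx; exists y.
    by case: HV0 => -[].
  pose P := fun V : A -> Prop => V = set0 \/ (mathieu t V /\ mnontrivial V /\ included M V).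
  have chain : forall F : set (set A), F `<=` P -> total_on F subset ->
      P (\bigcup_(X in F) X).
    move=> F FP Ftot.
    case: (classic (exists X, F X /\ exists x, X x)); last first.
      move=> hn; left; apply/funext => y; apply/propext; split => //.
      by case=> X FX Xy; apply: hn; exists X; split => //; exists y.
    move=> [X0 [FX0 [x0 X0x]]]; right.
    have memP : forall X y, F X -> X y ->
        mathieu t X /\ mnontrivial X /\ included M X.
      move=> X y FX Xy; case: (FP X FX) => // X0'; by rewrite X0' in Xy.
    have [mX0 [nX0 iX0]] := memP X0 x0 FX0 X0x.
    pose U := \bigcup_(X in F) X.
    have sU : subspace U.
      split.
      - by exists X0 => //; case: mX0 => -[].
      - move=> x y [X1 FX1 X1x] [X2 FX2 X2y].
        have [[[_ S1 _] _] _] := memP X1 x FX1 X1x.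
        have [[[_ S2 _] _] _] := memP X2 y FX2 X2y.
        case: (Ftot X1 X2 FX1 FX2) => sub.
          by exists X2 => //; apply: S2 => //; apply: sub.
        by exists X1 => //; apply: S1 => //; apply: sub.
      - move=> k x [X FX Xx]; have [[[_ _ SZ] _] _] := memP X x FX Xx.
        by exists X => //; apply: SZ.
    have cond : forall a, all_powers_in U a ->
        exists X, mathieu t X /\ all_powers_in X a /\ included X U.
      move=> a Ha; have [d Hd] := @alg_powers _ _ a (alg a).
      have step : forall n, exists2 X, F X & (exists y, X y) /\
          forall m, (1 <= m)%N -> (m <= n)%N -> X (a ^+ m).
        elim=> [|n [X FX [[y Xy] HX]]].
          by exists X0 => //; split; [exists x0 | move=> [|m]].
        have [Y FY Ya] := Ha n.+1 isT.
        case: (Ftot X Y FX FY) => sub.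
          exists Y => //; split; first by exists (a ^+ n.+1).
          move=> m m1; rewrite leq_eqVlt ltnS => /orP[/eqP -> //|mn].
          by apply: sub; apply: HX.
        exists X => //; split; first by exists y.
        move=> m m1; rewrite leq_eqVlt ltnS => /orP[/eqP -> |mn].
          by apply: sub.
        by apply: HX.
      have [X FX [[y Xy] HX]] := step d.
      have [mX _] := memP X y FX Xy.
      exists X; split => //; split; first by apply: Hd => //; case: mX.
      by move=> z Xz; exists X.
    split; [split => //|split].
    - case: t cond mX0 memP {HM HS0 P FP} => cond _ _.
      + move=> a Ha b; have [X [[_ HX] [Xa XU]]] := cond a Ha.
        have [N HN] := HX a Xa b; exists N => m Hm; apply: XU; exact: HN.
      + move=> a Ha b; have [X [[_ HX] [Xa XU]]] := cond a Ha.
        have [N HN] := HX a Xa b; exists N => m Hm; apply: XU; exact: HN.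
      + split.
          move=> a Ha b; have [X [[_ [HX _]] [Xa XU]]] := cond a Ha.
          have [N HN] := HX a Xa b; exists N => m Hm; apply: XU; exact: HN.
        move=> a Ha b; have [X [[_ [_ HX]] [Xa XU]]] := cond a Ha.
        have [N HN] := HX a Xa b; exists N => m Hm; apply: XU; exact: HN.
      + move=> a Ha b c; have [X [[_ HX] [Xa XU]]] := cond a Ha.
        have [N HN] := HX a Xa b c; exists N => m Hm; apply: XU; exact: HN.
    - case: nX0 => [[z [X0z zn0]] _]; split; first by exists z; split => //; exists X0.
      exists 1 => -[X FX X1]; have [mX [[_ [w nw]] _]] := memP X 1 FX X1.
      by apply: nw; apply: (@mathieu_one _ _ _ _ mX).
    - by move=> z Mz; exists X0 => //; apply: iX0.
  have [N [PN Nmax]] := Zorn_bigcup chain.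
  have [N0 | [mN [nN iN]]] := PN.
    exfalso; apply: (Nmax S0); last by right.
    rewrite N0; split => // sub; case: NS0 => -[z [S0z _]] _.
    exact: (sub z S0z).
  exists N; split => //; split => // N' mN' nN' iNN'.
  apply: NNPP => nsub; apply: (Nmax N'); first by split.
  by right; split => //; split => // z Mz; apply: iNN'; apply: iN.
split => //.
have [V0 [HV0 [_ PV0]]] := @exists_nontriv _ _ t Hx0.
by have [N [HN _]] := main V0 HV0 PV0; exists N.
Qed.
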